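(* The Burau representation $\rho_3$ specialized at $t_0\in \mathbb{C}^{*}$ is faithful if and only if $-t_0 \notin \Sigma_*$.
   Context: The braid group $\mathcal{B}_3$ is generated by $\sigma_1,\sigma_2$ with the relation $\sigma_1\sigma_2\sigma_1=\sigma_2\sigma_1\sigma_2$. The (reduced) Burau representation $\rho_3:\mathcal{B}_3\to \mathrm{GL}(2,\mathbb{Z}[t,t^{-1}])$ is defined by $\sigma_1\mapsto\begin{pmatrix}-t&1\\ 0&1\end{pmatrix}$, $\sigma_2\mapsto\begin{pmatrix}1&0\\ t&-t\end{pmatrix}$. Its specialization $\rho_3^{t_0}:\mathcal{B}_3\to\mathrm{GL}(2,\mathbb{C})$ is given by the same matrices with $t$ replaced by a nonzero complex number $t_0\in\mathbb{C}^*=\mathbb{C}\setminus\{0\}$. $q$-rationals: let $R_q=\begin{pmatrix}q&1\\ 0&1\end{pmatrix}$, $L_q=\begin{pmatrix}1&0\\ 1&q^{-1}\end{pmatrix}$, with $R=R_q|_{q=1}$, $L=L_q|_{q=1}$ the standard generators of $\mathrm{SL}(2,\mathbb{Z})$. For $M=\begin{pmatrix}r&v\\ s&u\end{pmatrix}=R^{a_1}L^{a_2}\cdots R^{a_{2m-1}}L^{a_{2m}}\in\mathrm{SL}(2,\mathbb{Z})$, let $M_q=R_q^{a_1}L_q^{a_2}\cdots R_q^{a_{2m-1}}L_q^{a_{2m}}=\begin{pmatrix}\mathcal{R}&\mathcal{V}\\ \mathcal{S}&\mathcal{U}\end{pmatrix}$, with Laurent polynomial entries in $q$. The $q$-deformation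 of the rational $\frac{r}{s}$ (first column of $M$) is $\left[\frac{r}{s}\right]_q=\frac{\mathcal{R}(q)}{\mathcal{S}(q)}$ (independent of choices). The singular set $\Sigma\subset\mathbb{C}^*$ is the union of the complex poles of all $q$-rationals $\left[\frac{r}{s}\right]_q$, $\frac{r}{s}\in\mathbb{Q}$, and the extended singular set is $\Sigma_*=\Sigma\cup\{1\}$. *)

(* Defs.v *)
From HB Require Import structures.
From mathcomp Require Import all_boot all_order all_algebra.
From mathcomp Require Import complex.
From mathcomp Require Import reals.
Set Implicit Arguments. Unset Strict Implicit. Unset Printing Implicit Defensive.
Import Order.TTheory GRing.Theory Num.Theory.
Local Open Scope ring_scope.

(* a letter: (generator index, sign);  (false, b) is sigma_1, (true, b) is
   sigma_2, and b = true means the inverse generator *)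
Definition letter := (bool * bool)%type.
Definition bword := seq letter.

Definition letter_inv (x : letter) : letter := (x.1, ~~ x.2).

Inductive braid_eq : bword -> bword -> Prop :=
| beq_refl w : braid_eq w w
| beq_sym w v : braid_eq w v -> braid_eq v w
| beq_trans u v w : braid_eq u v -> braid_eq v w -> braid_eq u w
| beq_cat u u' v v' : braid_eq u u' -> braid_eq v v' -> braid_eq (u ++ v) (u' ++ v')
| beq_free x : braid_eq [:: x; letter_inv x] [::]
| beq_braid : braid_eq [:: (false, false); (true, false); (false, false)]
                       [:: (true, false); (false, false); (true, false)].

Section Burau.
Variable C : fieldType.

Definition burau_s1 (t : C) : 'M[C]_2 :=
  \matrix_(i < 2, j < 2)
    (if (i == 0 :> nat) && (j == 0 :> nat) then - t
     else if (i == 0 :> nat) then 1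
     else if (j == 0 :> nat) then 0 else 1).

Definition burau_s2 (t : C) : 'M[C]_2 :=
  \matrix_(i < 2, j < 2)
    (if (i == 0 :> nat) && (j == 0 :> nat) then 1
     else if (i == 0 :> nat) then 0
     else if (j == 0 :> nat) then t else - t).

Definition burau_letter (t : C) (x : letter) : 'M[C]_2 :=
  let A := if x.1 then burau_s2 t else burau_s1 t in
  if x.2 then invmx A else A.

Definition burau_word (t : C) (w : bword) : 'M[C]_2 :=
  foldr (fun x M => burau_letter t x *m M) 1%:M w.

Definition burau_faithful (t0 : C) : Prop :=
  forall w : bword, burau_word t0 w = 1%:M -> braid_eq w [::].

End Burau.

(* Laurent polynomials in q are viewed inside the field of rational    *)
(* functions {fraction {poly C}}, with q = 'X.                         *)

Section QRat.
Variable C : fieldType.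

Definition RF := {fraction {poly C}}.
Local Notation "x %:F" := (@FracField.tofrac {poly C} x).
Definition qF : RF := ('X : {poly C})%:F.

Definition mx2 (a b c d : RF) : 'M[RF]_2 :=
  \matrix_(i < 2, j < 2)
    (if (i == 0 :> nat) && (j == 0 :> nat) then a
     else if (i == 0 :> nat) then b
     else if (j == 0 :> nat) then c else d).

Definition Rq : 'M[RF]_2 := mx2 qF 1 0 1.
Definition Lq : 'M[RF]_2 := mx2 1 0 1 qF^-1.

Definition mxpowz (A : 'M[RF]_2) (a : int) : 'M[RF]_2 :=
  match a with
  | Posz n => A ^+ n
  | Negz n => invmx (A ^+ n.+1)
  end.

(* M_q = R_q^{a1} L_q^{a2} ... R_q^{a_{2m-1}} L_q^{a_{2m}} for the exponent
   sequence [:: (a1, a2); ...; (a_{2m-1}, a_{2m})] *)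
Definition Mq (s : seq (int * int)) : 'M[RF]_2 :=
  foldr (fun p M => mxpowz Rq p.1 *m mxpowz Lq p.2 *m M) 1%:M s.

(* the classical matrix M = M_q at q = 1, with integer entries *)
Definition Rz : 'M[int]_2 := \matrix_(i < 2, j < 2)
    (if (i == 0 :> nat) && (j == 0 :> nat) then 1
     else if (i == 0 :> nat) then 1
     else if (j == 0 :> nat) then 0 else 1).
Definition Lz : 'M[int]_2 := \matrix_(i < 2, j < 2)
    (if (i == 0 :> nat) && (j == 0 :> nat) then 1
     else if (i == 0 :> nat) then 0
     else if (j == 0 :> nat) then 1 else 1).
Definition RzInv : 'M[int]_2 := \matrix_(i < 2, j < 2)
    (if (i == 0 :> nat) && (j == 0 :> nat) then 1
     else if (i == 0 :> nat) then -1
     else if (j == 0 :> nat) then 0 else 1).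
Definition LzInv : 'M[int]_2 := \matrix_(i < 2, j < 2)
    (if (i == 0 :> nat) && (j == 0 :> nat) then 1
     else if (i == 0 :> nat) then 0
     else if (j == 0 :> nat) then -1 else 1).
Definition zpow (A Ainv : 'M[int]_2) (a : int) : 'M[int]_2 :=
  match a with
  | Posz n => A ^+ n
  | Negz n => Ainv ^+ n.+1
  end.
Definition Mz (s : seq (int * int)) : 'M[int]_2 :=
  foldr (fun p M => zpow Rz RzInv p.1 *m zpow Lz LzInv p.2 *m M) 1%:M s.

Definition is_pole (f : RF) (q0 : C) : Prop :=
  ~ exists p d : {poly C}, d.[q0] != 0 /\ f = p%:F / d%:F.

(* Sigma: the union of the poles in C^* of all q-rationals [r/s]_q = R(q)/S(q),
   where (r, s) is the first column of M = R^{a1}L^{a2}...  with s <> 0 *)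
Definition singular_set (q0 : C) : Prop :=
  q0 != 0 /\
  exists s : seq (int * int),
    Mz s 1 0 != 0 /\ is_pole (Mq s 0 0 / Mq s 1 0) q0.

Definition ext_singular_set (q0 : C) : Prop := singular_set q0 \/ q0 = 1.

End QRat.

(* Main.v *)
Require Import Defs.
From HB Require Import structures.
From mathcomp Require Import all_boot all_order all_algebra.
From mathcomp Require Import complex.
From mathcomp Require Import reals.
From mathcomp Require Import ring lra zify.
From Stdlib Require Import Setoid Morphisms.
Set Implicit Arguments. Unset Strict Implicit. Unset Printing Implicit Defensive.
Import Order.TTheory GRing.Theory Num.Theory.
Local Open Scope ring_scope.

Section M2.
Variable R : nzRingType.
Definition m2 (a b c d : R) : 'M[R]_2 :=
  \matrix_(i < 2, j < 2)
    (if (i == 0 :> nat) && (j == 0 :> nat) then a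
     else if (i == 0 :> nat) then b
     else if (j == 0 :> nat) then c else d).

Lemma m2E00 a b c d : m2 a b c d 0 0 = a. Proof. by rewrite mxE. Qed.
Lemma m2E01 a b c d : m2 a b c d 0 1 = b. Proof. by rewrite mxE. Qed.
Lemma m2E10 a b c d : m2 a b c d 1 0 = c. Proof. by rewrite mxE. Qed.
Lemma m2E11 a b c d : m2 a b c d 1 1 = d. Proof. by rewrite mxE. Qed.

Lemma ord2P (i : 'I_2) : i = 0 \/ i = 1.
Proof. case: i => [[|[|//]] Hi]; [left|right]; exact: val_inj. Qed.

Lemma m2_eta (A : 'M[R]_2) : A = m2 (A 0 0) (A 0 1) (A 1 0) (A 1 1).
Proof.
apply/matrixP => i j; rewrite mxE.
by case: (ord2P i) => ->; case: (ord2P j) => ->.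
Qed.

Lemma m2_mul a b c d a' b' c' d' :
  m2 a b c d *m m2 a' b' c' d' =
  m2 (a*a'+b*c') (a*b'+b*d') (c*a'+d*c') (c*b'+d*d').
Proof.
apply/matrixP => i j; rewrite !mxE !big_ord_recr big_ord0 /= !mxE add0r.
by case: (ord2P i) => ->; case: (ord2P j) => ->.
Qed.

Lemma m2_1 : 1%:M = m2 1 0 0 1.
Proof.
apply/matrixP => i j; rewrite !mxE.
by case: (ord2P i) => ->; case: (ord2P j) => ->.
Qed.

Lemma m2_scale k a b c d : k *: m2 a b c d = m2 (k*a) (k*b) (k*c) (k*d).
Proof.
apply/matrixP => i j; rewrite !mxE.
by case: (ord2P i) => ->; case: (ord2P j) => ->.
Qed.

Lemma m2_add a b c d a' b' c' d' :
  m2 a b c d + m2 a' b' c' d' = m2 (a+a') (b+b') (c+c') (d+d').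
Proof.
apply/matrixP => i j; rewrite !mxE.
by case: (ord2P i) => ->; case: (ord2P j) => ->.
Qed.

Lemma m2_inj a b c d a' b' c' d' :
  m2 a b c d = m2 a' b' c' d' -> [/\ a = a', b = b', c = c' & d = d'].
Proof.
move=> E; split.
- by rewrite -(m2E00 a b c d) E m2E00.
- by rewrite -(m2E01 a b c d) E m2E01.
- by rewrite -(m2E10 a b c d) E m2E10.
- by rewrite -(m2E11 a b c d) E m2E11.
Qed.

Lemma m2_eq a b c d a' b' c' d' :
  a = a' -> b = b' -> c = c' -> d = d' -> m2 a b c d = m2 a' b' c' d'.
Proof. by move=> -> -> -> ->. Qed.

End M2.

Lemma map_m2 (R S : nzRingType) (f : R -> S) a b c d :
  map_mx f (m2 a b c d) = m2 (f a) (f b) (f c) (f d).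
Proof.
apply/matrixP => i j; rewrite !mxE.
by case: (ord2P i) => ->; case: (ord2P j) => ->.
Qed.

Lemma invmx_right (R : comUnitRingType) (n : nat) (A B : 'M[R]_n) :
  A *m B = 1%:M -> invmx A = B.
Proof.
move=> AB; have [uA _] := mulmx1_unit AB.
by rewrite -[invmx A]mulmx1 -AB mulmxA mulVmx // mul1mx.
Qed.

#[global] Instance braid_eq_Equiv : Equivalence braid_eq.
Proof. split; [exact: beq_refl | exact: beq_sym | exact: beq_trans]. Qed.

#[global] Instance cat_Proper : Proper (braid_eq ==> braid_eq ==> braid_eq) (@cat letter).
Proof. move=> u u' Hu v v' Hv; exact: beq_cat. Qed.

#[global] Hint Resolve beq_refl : core.

Lemma letter_invK x : letter_inv (letter_inv x) = x.
Proof. by case: x => a []. Qed.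

Lemma beq_free' x : braid_eq [:: letter_inv x; x] [::].
Proof. by rewrite -{2}(letter_invK x); exact: beq_free. Qed.

Definition inv_word (w : bword) : bword := rev (map letter_inv w).

Lemma inv_word_cons x w : inv_word (x :: w) = inv_word w ++ [:: letter_inv x].
Proof. by rewrite /inv_word /= rev_cons cats1. Qed.

Lemma inv_word_cat u v : inv_word (u ++ v) = inv_word v ++ inv_word u.
Proof. by rewrite /inv_word map_cat rev_cat. Qed.

Lemma cat_inv w : braid_eq (w ++ inv_word w) [::].
Proof.
elim: w => [|x w IH] //=.
rewrite inv_word_cons.
have -> : x :: w ++ (inv_word w ++ [:: letter_inv x]) = [:: x] ++ ((w ++ inv_word w) ++ [:: letter_inv x]) by rewrite catA.
rewrite IH /=; exact: beq_free.
Qed.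

Lemma inv_cat w : braid_eq (inv_word w ++ w) [::].
Proof.
elim: w => [|x w IH] //=.
rewrite inv_word_cons.
have -> : (inv_word w ++ [:: letter_inv x]) ++ x :: w = inv_word w ++ ([:: letter_inv x; x] ++ w) by rewrite -catA.
rewrite beq_free' /=; exact: IH.
Qed.

Lemma cancel_l a w v : braid_eq (a ++ w) (a ++ v) -> braid_eq w v.
Proof.
move=> H.
have E : forall u, braid_eq u (inv_word a ++ (a ++ u)).
  move=> u; rewrite catA inv_cat; reflexivity.
rewrite (E w) (E v) H; reflexivity.
Qed.

Section Inv.
Variable R : nzRingType.
Variable f : letter -> 'M[R]_2.
Hypothesis f_free : forall x, f x *m f (letter_inv x) = 1%:M.
Hypothesis f_braid : f (false,false) *m (f (true,false) *m (f (false,false) *m 1%:M))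
   = f (true,false) *m (f (false,false) *m (f (true,false) *m 1%:M)).
Definition fw (w : bword) := foldr (fun x M => f x *m M) 1%:M w.
Lemma fw_cat u v : fw (u ++ v) = fw u *m fw v.
Proof. elim: u => [|x u IH] /=; first by rewrite mul1mx. by rewrite IH mulmxA. Qed.
Lemma fw_inv u v : braid_eq u v -> fw u = fw v.
Proof.
elim=> //.
- by move=> u0 v0 w _ E1 _ E2; rewrite E1 E2.
- by move=> u0 u' v0 v' _ E1 _ E2; rewrite !fw_cat E1 E2.
- by move=> x /=; rewrite mulmx1 f_free.
Qed.
End Inv.

Notation s1 := (false,false).
Notation s2 := (true,false).
Notation s1i := (false,true).
Notation s2i := (true,true).
Definition Xw : bword := [:: s1; s2; s1].
Definition Yw : bword := [:: s1; s2].
Definition Zw : bword := Xw ++ Xw.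
Arguments Xw : simpl never.
Arguments Yw : simpl never.
Arguments Zw : simpl never.

Lemma XX_YYY : braid_eq (Xw ++ Xw) (Yw ++ Yw ++ Yw).
Proof.
have -> : Yw ++ Yw ++ Yw = Xw ++ [:: s2; s1; s2] by [].
apply: beq_cat; [reflexivity| exact: beq_braid].
Qed.

Lemma X_s1 : braid_eq (Xw ++ [:: s1]) ([:: s2] ++ Xw).
Proof.
have -> : [:: s2] ++ Xw = [:: s2; s1; s2] ++ [:: s1] by [].
apply: beq_cat; [exact: beq_braid | reflexivity].
Qed.

Lemma X_s2 : braid_eq (Xw ++ [:: s2]) ([:: s1] ++ Xw).
Proof.
have -> : Xw ++ [:: s2] = [:: s1] ++ [:: s2; s1; s2] by [].
apply: beq_cat; [reflexivity | symmetry; exact: beq_braid].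
Qed.

Lemma comm_inv a x : braid_eq (a ++ [:: x]) ([:: x] ++ a) ->
  braid_eq (a ++ [:: letter_inv x]) ([:: letter_inv x] ++ a).
Proof.
move=> H.
have E1 : braid_eq (a ++ [:: letter_inv x]) ([:: letter_inv x] ++ ([:: x] ++ a) ++ [:: letter_inv x]).
  rewrite catA (catA [:: letter_inv x]).
  have -> : [:: letter_inv x] ++ [:: x] = [:: letter_inv x; x] by [].
  rewrite beq_free'; reflexivity.
rewrite E1 -H -catA.
have -> : [:: x] ++ [:: letter_inv x] = [:: x; letter_inv x] by [].
rewrite beq_free cats0; reflexivity.
Qed.

Lemma comm_word a : (forall x, braid_eq (a ++ [:: x]) ([:: x] ++ a)) ->
  forall w, braid_eq (a ++ w) (w ++ a).
Proof.
move=> H; elim=> [|x w IH]; first by rewrite cats0.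
rewrite -cat1s catA H -catA IH catA; reflexivity.
Qed.

Lemma Z_letter x : braid_eq (Zw ++ [:: x]) ([:: x] ++ Zw).
Proof.
have H1 : braid_eq (Zw ++ [:: s1]) ([:: s1] ++ Zw).
  rewrite /Zw -catA X_s1 catA X_s2 -catA; reflexivity.
have H2 : braid_eq (Zw ++ [:: s2]) ([:: s2] ++ Zw).
  rewrite /Zw -catA X_s2 catA X_s1 -catA; reflexivity.
case: x => [[] []].
- exact: (comm_inv H2).
- exact: H2.
- exact: (comm_inv H1).
- exact: H1.
Qed.

Lemma Z_central w : braid_eq (Zw ++ w) (w ++ Zw).
Proof. exact: comm_word Z_letter w. Qed.

Definition Zn (k : nat) : bword := flatten (nseq k Zw).

Lemma Zn_add k c : Zn (k + c) = Zn k ++ Zn c.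
Proof. by rewrite /Zn nseqD flatten_cat. Qed.

Lemma Zn_central k w : braid_eq (Zn k ++ w) (w ++ Zn k).
Proof.
elim: k => [|k IH]; first by rewrite cats0.
have -> : Zn k.+1 = Zw ++ Zn k by [].
rewrite -catA IH catA Z_central -catA; reflexivity.
Qed.

Definition rdata := (bool * seq bool * option bool)%type.
Definition Ye (e : bool) : bword := if e then Yw ++ Yw else Yw.
Definition blk (e : bool) : bword := Ye e ++ Xw.
Definition restw (r : rdata) : bword :=
  (if r.1.1 then Xw else [::]) ++ flatten (map blk r.1.2) ++
  (if r.2 is Some e then Ye e else [::]).

Definition mulX (r : rdata) : nat * rdata :=
  let: (a, bs, tl) := r in if a then (1%N, (false, bs, tl)) else (0%N, (true, bs, tl)).

Definition mulY (r : rdata) : nat * rdata :=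
  match r with
  | (true, bs, tl) => (0%N, (false, false :: bs, tl))
  | (false, false :: bs, tl) => (0%N, (false, true :: bs, tl))
  | (false, true :: bs, tl) => (1%N, (true, bs, tl))
  | (false, [::], Some false) => (0%N, (false, [::], Some true))
  | (false, [::], Some true) => (1%N, (false, [::], None))
  | (false, [::], None) => (0%N, (false, [::], Some false))
  end.

Lemma mulX_ok r : braid_eq (Xw ++ restw r) (Zn (mulX r).1 ++ restw (mulX r).2).
Proof. by case: r => [[[] bs] tl] /=; rewrite ?cats0 //; reflexivity. Qed.

Lemma YYY_Z : braid_eq (Yw ++ Yw ++ Yw) Zw.
Proof. rewrite /Zw XX_YYY; reflexivity. Qed.

Lemma YYY_Zw w : braid_eq (Yw ++ Yw ++ Yw ++ w) (Zw ++ w).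
Proof. rewrite !catA -(catA Yw) YYY_Z; reflexivity. Qed.

Lemma Zn1 : Zn 1 = Zw.
Proof. rewrite /Zn; cbn -[cat Zw]; by rewrite cats0. Qed.

Lemma restw_true bs tl : restw (false, true :: bs, tl) = Yw ++ Yw ++ restw (true, bs, tl).
Proof. rewrite /restw /blk /Ye; cbn -[cat Xw Yw]; by rewrite !catA. Qed.

Lemma mulY_ok r : braid_eq (Yw ++ restw r) (Zn (mulY r).1 ++ restw (mulY r).2).
Proof.
case: r => [[[] [|[] bs]] [[]|]]; cbn -[cat Xw Yw Zw Zn]; rewrite ?cats0 //.
- rewrite Zn1; have -> : restw (false, [::], Some true) = Yw ++ Yw by [].
  exact: YYY_Z.
all: rewrite Zn1 restw_true YYY_Zw; reflexivity.
Qed.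

Definition nform := (nat * rdata)%type.
Definition emb (n : nform) : bword := Zn n.1 ++ restw n.2.

Definition actX (n : nform) : nform := ((n.1 + (mulX n.2).1)%N, (mulX n.2).2).
Definition actY (n : nform) : nform := ((n.1 + (mulY n.2).1)%N, (mulY n.2).2).

Lemma actX_ok n : braid_eq (Xw ++ emb n) (emb (actX n)).
Proof.
case: n => k r; rewrite /emb /actX Zn_add catA -Zn_central -catA mulX_ok catA.
reflexivity.
Qed.

Lemma actY_ok n : braid_eq (Yw ++ emb n) (emb (actY n)).
Proof.
case: n => k r; rewrite /emb /actY Zn_add catA -Zn_central -catA mulY_ok catA.
reflexivity.
Qed.

Definition wordB (b : bool) : bword := if b then Xw else Yw.
Definition apply_w (wl : seq bool) (n : nform) : nform :=
  foldr (fun b n => if b then actX n else actY n) n wl.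

Lemma apply_w_ok wl n : braid_eq (flatten (map wordB wl) ++ emb n) (emb (apply_w wl n)).
Proof.
elim: wl => [|b wl IH] /=; first reflexivity.
rewrite -catA IH; case: b; [exact: actX_ok | exact: actY_ok].
Qed.

Definition wl_of (x : letter) : seq bool :=
  match x with
  | (false, false) => [:: false; false; true]
  | (true, false) => [:: true; false; false]
  | (false, true) => [:: true; false]
  | (true, true) => [:: false; true]
  end.

Lemma Z_letter_wl x : braid_eq (Zw ++ [:: x]) (flatten (map wordB (wl_of x))).
Proof.
case: x => [[] []].
-
  have -> : Zw ++ [:: s2i] = Xw ++ [:: s1; s2; s1] ++ [:: s2i] by [].
  rewrite beq_braid.
  have -> : Xw ++ [:: s2; s1; s2] ++ [:: s2i] = (Xw ++ [:: s2; s1]) ++ [:: s2; s2i] by [].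
  rewrite beq_free cats0; by [].
- by [].
- have -> : Zw ++ [:: s1i] = (Xw ++ Yw) ++ [:: s1; s1i] by [].
  rewrite beq_free cats0; by [].
- have -> : flatten (map wordB (wl_of s1)) = Yw ++ Yw ++ Yw ++ [:: s1] by [].
  rewrite YYY_Zw; reflexivity.
Qed.

Definition nfz (w : bword) : nform :=
  foldr (fun x n => apply_w (wl_of x) n) (0%N, (false, [::], None)) w.

Lemma nfz_ok w : braid_eq (Zn (size w) ++ w) (emb (nfz w)).
Proof.
elim: w => [|x w IH]; first by [].
have -> : Zn (size (x :: w)) ++ x :: w = Zw ++ (Zn (size w) ++ ([:: x] ++ w)) by [].
rewrite (catA (Zn (size w))) (Zn_central _ [:: x]) -catA catA Z_letter_wl IH.
exact: apply_w_ok.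
Qed.

Definition Nl (R : nzRingType) (q : R) (x : letter) : 'M[R]_2 :=
  match x with
  | (false, false) => m2 q 1 0 1
  | (true, false) => m2 1 0 (-q) q
  | (false, true) => m2 1 (-1) 0 q
  | (true, true) => m2 q 0 q 1
  end.

Definition Pw (R : nzRingType) (q : R) (w : bword) : 'M[R]_2 :=
  foldr (fun x M => Nl q x *m M) 1%:M w.

Lemma Pw_cat (R : nzRingType) (q : R) u v : Pw q (u ++ v) = Pw q u *m Pw q v.
Proof. elim: u => [|x u IH] /=; first by rewrite mul1mx. by rewrite IH mulmxA. Qed.

Lemma map_Pw (R S : nzRingType) (f : {rmorphism R -> S}) (q : R) w :
  map_mx f (Pw q w) = Pw (f q) w.
Proof.
elim: w => [|x w IH] /=; first by rewrite map_mx1.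
rewrite map_mxM IH; congr (_ *m _).
by case: x => [[] []]; rewrite /Nl map_m2 ?rmorphN ?rmorph1 ?rmorph0.
Qed.

Lemma burau_wordE (F : fieldType) (t : F) w :
  burau_word t w = foldr (fun x M => burau_letter t x *m M) 1%:M w.
Proof. by []. Qed.

Lemma burau_cat (F : fieldType) (t : F) u v :
  burau_word t (u ++ v) = burau_word t u *m burau_word t v.
Proof. elim: u => [|x u IH] /=; first by rewrite mul1mx. by rewrite IH mulmxA. Qed.

Definition ne (w : bword) : nat := count (fun x : letter => x.2) w.

Lemma burau_letterE (F : fieldType) (q : F) (hq : q != 0) x :
  burau_letter (-q) x = (q ^+ (x.2 : nat))^-1 *: Nl q x.
Proof.
case: x => [[] []] /=; rewrite ?expr0 ?expr1 ?invr1 ?scale1r /burau_letter /=.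
- apply: invmx_right; rewrite /burau_s2 -/(m2 _ _ _ _) m2_scale m2_mul m2_1.
  by apply: m2_eq; field.
- rewrite /burau_s2 -/(m2 _ _ _ _); by rewrite opprK.
- apply: invmx_right; rewrite /burau_s1 -/(m2 _ _ _ _) m2_scale m2_mul m2_1.
  by apply: m2_eq; field.
- by rewrite /burau_s1 -/(m2 _ _ _ _) opprK.
Qed.

Lemma burau_Pw (F : fieldType) (q : F) (hq : q != 0) w :
  burau_word (-q) w = (q ^+ ne w)^-1 *: Pw q w.
Proof.
elim: w => [|x w IH]; first by rewrite /= expr0 invr1 scale1r.
rewrite /= IH burau_letterE // -scalemxAl -scalemxAr scalerA.
by rewrite exprD invfM mulrC.
Qed.

Definition pw (l : letter) (a : int) : bword :=
  match a with Posz n => nseq n l | Negz n => nseq n.+1 (letter_inv l) end.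

Definition word_of (s : seq (int * int)) : bword :=
  flatten [seq pw s1 p.1 ++ pw s2i p.2 | p <- s].

Lemma burau_nseq (F : fieldType) (t : F) n l :
  burau_word t (nseq n l) = burau_letter t l ^+ n.
Proof.
elim: n => [|n IH]; first by rewrite expr0.
by rewrite exprS /= IH mulmxE.
Qed.

Lemma Pw_nseq (R : nzRingType) (q : R) n l : Pw q (nseq n l) = Nl q l ^+ n.
Proof.
elim: n => [|n IH]; first by rewrite expr0.
by rewrite exprS /= IH mulmxE.
Qed.

Lemma invmxX (F : fieldType) (A : 'M[F]_2) m : invmx (A ^+ m) = (invmx A) ^+ m.
Proof. exact: (esym (exprVn A m)). Qed.

Lemma invL1 (F : fieldType) (q : F) : q != 0 -> invmx (m2 1 0 (-q) q) = m2 1 0 1 q^-1.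
Proof.
move=> hq; apply: invmx_right; rewrite m2_mul m2_1.
by apply: m2_eq; field.
Qed.

Lemma invL2 (F : fieldType) (q : F) : q != 0 -> invmx (m2 1 0 1 q^-1) = m2 1 0 (-q) q.
Proof.
move=> hq; apply: invmx_right; rewrite m2_mul m2_1.
by apply: m2_eq; field.
Qed.

Section QF.
Variable C : fieldType.
Local Notation RF := (RF C).
Local Notation qF := (qF C).

Lemma qF_neq0 : qF != 0.
Proof. by rewrite /qF tofrac_eq0 polyX_eq0. Qed.


Lemma Rq_letter : burau_letter (-qF) s1 = Rq C.
Proof. by rewrite /burau_letter /= /burau_s1 opprK. Qed.

Lemma Lq_letter : burau_letter (-qF) s2i = Lq C.
Proof.
rewrite /burau_letter /= /burau_s2 -/(m2 _ _ _ _) opprK /Lq /mx2 -/(m2 _ _ _ _).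
exact: (invL1 qF_neq0).
Qed.

Lemma Lq_inv : invmx (Lq C) = burau_letter (-qF) s2.
Proof.
rewrite /burau_letter /= /burau_s2 -/(m2 _ _ _ _) opprK /Lq /mx2 -/(m2 _ _ _ _).
exact: (invL2 qF_neq0).
Qed.

Lemma mxpowzR a : mxpowz (Rq C) a = burau_word (-qF) (pw s1 a).
Proof.
case: a => n /=; rewrite burau_nseq.
- by rewrite Rq_letter.
- by rewrite invmxX -Rq_letter mulmxE -exprS.
Qed.

Lemma mxpowzL a : mxpowz (Lq C) a = burau_word (-qF) (pw s2i a).
Proof.
case: a => n /=; rewrite burau_nseq.
- by rewrite Lq_letter.
- by rewrite invmxX Lq_inv mulmxE -exprS.
Qed.

Lemma Mq_word s : Mq C s = burau_word (-qF) (word_of s).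
Proof.
elim: s => [|p s IH] //=.
rewrite /word_of /= !burau_cat -/(word_of s) -IH mxpowzR mxpowzL.
by [].
Qed.
End QF.

Lemma zpowR a : zpow Rz RzInv a = Pw (1 : int) (pw s1 a).
Proof. case: a => n /=; rewrite Pw_nseq ?mulmxE -?exprS; reflexivity. Qed.

Lemma zpowL a : zpow Lz LzInv a = Pw (1 : int) (pw s2i a).
Proof. case: a => n /=; rewrite Pw_nseq ?mulmxE -?exprS; reflexivity. Qed.

Lemma Mz_word s : Mz s = Pw (1 : int) (word_of s).
Proof.
elim: s => [|p s IH] //=.
by rewrite /word_of /= !Pw_cat -/(word_of s) -IH zpowR zpowL.
Qed.

Definition pair_of (x : letter) : int * int :=
  match x with
  | (false, false) => (1, 0)
  | (true, false) => (0, -1)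
  | (false, true) => (-1, 0)
  | (true, true) => (0, 1)
  end.

Lemma word_of_pair w : word_of (map pair_of w) = w.
Proof.
elim: w => [|x w IH] //=.
rewrite /word_of /= -/(word_of _) IH.
by case: x => [[] []].
Qed.

Lemma burau_letterE' (F : fieldType) (t : F) (ht : t != 0) x :
  burau_letter t x = ((-t) ^+ (x.2 : nat))^-1 *: Nl (-t) x.
Proof. by rewrite -burau_letterE ?opprK // oppr_eq0. Qed.

Lemma burau_free (F : fieldType) (t : F) (ht : t != 0) x :
  burau_letter t x *m burau_letter t (letter_inv x) = 1%:M.
Proof.
rewrite !burau_letterE' //.
have ht' : - t != 0 by rewrite oppr_eq0.
move: (-t) ht' => q hq.
case: x => [[] []] /=; rewrite ?expr0 ?expr1 ?invr1 ?scale1r /Nl !m2_scale m2_mul m2_1;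
  by apply: m2_eq; field.
Qed.

Lemma burau_braid (F : fieldType) (t : F) :
  burau_letter t s1 *m (burau_letter t s2 *m (burau_letter t s1 *m 1%:M))
  = burau_letter t s2 *m (burau_letter t s1 *m (burau_letter t s2 *m 1%:M)).
Proof.
rewrite /burau_letter /= /burau_s1 /burau_s2 -!/(m2 _ _ _ _) m2_1 !m2_mul.
by apply: m2_eq; ring.
Qed.

Lemma burau_inv (F : fieldType) (t : F) (ht : t != 0) u v :
  braid_eq u v -> burau_word t u = burau_word t v.
Proof.
move=> H; have := fw_inv (burau_free ht) (burau_braid t) H.
by rewrite /fw.
Qed.

Lemma Nl1_free x : Nl (1 : int) x *m Nl 1 (letter_inv x) = 1%:M.
Proof.
by case: x => [[] []] /=; rewrite /Nl m2_mul m2_1; apply: m2_eq; ring.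
Qed.

Lemma Nl1_braid :
  Nl (1:int) s1 *m (Nl 1 s2 *m (Nl 1 s1 *m 1%:M))
  = Nl 1 s2 *m (Nl 1 s1 *m (Nl 1 s2 *m 1%:M)).
Proof. by rewrite /Nl m2_1 !m2_mul; apply: m2_eq; ring. Qed.

Lemma Pw1_inv u v : braid_eq u v -> Pw (1 : int) u = Pw 1 v.
Proof.
move=> H; have := fw_inv Nl1_free Nl1_braid H.
by rewrite /fw.
Qed.

Lemma burau_Zw (F : fieldType) (t : F) : burau_word t Zw = (t ^+ 3) *: 1%:M.
Proof.
rewrite /burau_word /Zw /Xw /= /burau_letter /= /burau_s1 /burau_s2 -!/(m2 _ _ _ _).
rewrite m2_1 !m2_mul m2_scale.
by apply: m2_eq; ring.
Qed.

Lemma burau_Zn (F : fieldType) (t : F) k : burau_word t (Zn k) = (t ^+ 3) ^+ k *: 1%:M.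
Proof.
elim: k => [|k IH]; first by rewrite expr0 scale1r.
have -> : Zn k.+1 = Zw ++ Zn k by [].
by rewrite burau_cat IH burau_Zw -scalemxAl mul1mx scalerA -exprS.
Qed.

Definition d2 (R : comNzRingType) (A : 'M[R]_2) := A 0 0 * A 1 1 - A 0 1 * A 1 0.

Lemma d2M (R : comNzRingType) (A B : 'M[R]_2) : d2 (A *m B) = d2 A * d2 B.
Proof.
rewrite [A]m2_eta [B]m2_eta m2_mul /d2 !m2E00 !m2E01 !m2E10 !m2E11; ring.
Qed.

Lemma d2_Pw1 w : d2 (Pw (1:int) w) = 1.
Proof.
elim: w => [|x w IH]; first by rewrite /= m2_1 /d2 !m2E00 !m2E01 !m2E10 !m2E11; ring.
rewrite /= d2M IH mulr1.
by case: x => [[] []]; rewrite /Nl /d2 !m2E00 !m2E01 !m2E10 !m2E11; ring.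
Qed.

Notation Zint := (Pw (1 : int)).
Arguments Pw : simpl never.

Lemma Zint_X : Zint Xw = m2 0 1 (-1) 0.
Proof. rewrite /Pw /Xw /= /Nl m2_1 !m2_mul; apply: m2_eq; ring. Qed.
Lemma Zint_Y : Zint Yw = m2 0 1 (-1) 1.
Proof. rewrite /Pw /Yw /= /Nl m2_1 !m2_mul; apply: m2_eq; ring. Qed.
Lemma Zint_YY : Zint (Yw ++ Yw) = m2 (-1) 1 (-1) 0.
Proof. rewrite Pw_cat Zint_Y m2_mul; apply: m2_eq; ring. Qed.
Lemma Zint_blk0 : Zint (blk false) = m2 (-1) 0 (-1) (-1).
Proof. rewrite /blk /Ye Pw_cat Zint_Y Zint_X m2_mul; apply: m2_eq; ring. Qed.
Lemma Zint_blk1 : Zint (blk true) = m2 (-1) (-1) 0 (-1).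
Proof. rewrite /blk /Ye Pw_cat Zint_YY Zint_X m2_mul; apply: m2_eq; ring. Qed.

Lemma blocks_pos bs : exists (sg a b c d : int),
  [/\ sg = 1 \/ sg = -1, 1 <= a, 1 <= d, 0 <= b & 0 <= c] /\
  (bs != [::] -> 1 <= b + c) /\
  (bs = [::] -> [/\ sg = 1, a = 1, b = 0, c = 0 & d = 1]) /\
  Zint (flatten (map blk bs)) = m2 (sg*a) (sg*b) (sg*c) (sg*d).
Proof.
elim: bs => [|e bs [sg [a [b [c [d [[Hsg Ha Hd Hb Hc] [_ [_ E]]]]]]]]].
  exists 1, 1, 0, 0, 1; split; first by split; [left| | | |].
  split=> //; split=> //. by rewrite /Pw /= m2_1; apply: m2_eq; ring.
rewrite /= Pw_cat E.
case: e.
- exists (-sg), (a + c), (b + d), c, d; split; first by split; [case: Hsg => ->; [right|left] | lia.. ].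
  split; first by move=> _; lia.
  split=> //.
  rewrite Zint_blk1 m2_mul; apply: m2_eq; ring.
- exists (-sg), a, b, (a + c), (b + d); split; first by split; [case: Hsg => ->; [right|left] | lia.. ].
  split; first by move=> _; lia.
  split=> //.
  rewrite Zint_blk0 m2_mul; apply: m2_eq; ring.
Qed.

Definition rtriv : rdata := (false, [::], None).

Lemma restw_Zint r : Zint (restw r) =
  (if r.1.1 then Zint Xw else 1%:M) *m Zint (flatten (map blk r.1.2)) *m
  (if r.2 is Some e then Zint (Ye e) else 1%:M).
Proof.
case: r => [[a bs] tl]; rewrite /restw /= !Pw_cat mulmxA.
by case: a; case: tl => [e|] /=; rewrite ?mul1mx ?mulmx1.
Qed.

Lemma rest_nontriv r sg0 : r <> rtriv -> sg0 = 1 \/ sg0 = -1 ->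
  Zint (restw r) <> m2 sg0 0 0 sg0.
Proof.
move=> Hr Hsg0; rewrite restw_Zint.
case: r Hr => [[al bs] tl] Hr /=.
have [sg [a [b [c [d [[Hsg Ha Hd Hb Hc] [Hne [Hemp ->]]]]]]]] := blocks_pos bs.
case: bs Hne Hemp Hr => [|e bs] Hne Hemp Hr.
  have [-> -> -> -> ->] := Hemp erefl.
  case: al Hr; case: tl => [[]|] Hr; try (by exfalso; apply: Hr);
  rewrite /Ye ?Zint_X ?Zint_Y ?Zint_YY ?m2_1 ?m2_mul => /m2_inj [E1 E2 E3 E4];
  case: Hsg0 => Hs; rewrite Hs in E1 E2 E3 E4; lia.
have Hbc : 1 <= b + c by apply: Hne.
clear Hr; case: al; case: tl => [[]|];
rewrite /Ye ?Zint_X ?Zint_Y ?Zint_YY ?m2_1 ?m2_mul => /m2_inj [E1 E2 E3 E4];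
case: Hsg0 => Hs; case: Hsg => Hs'; rewrite Hs Hs' in E1 E2 E3 E4; lia.
Qed.

Lemma Pw1 (R : nzRingType) (q : R) x : Pw q [:: x] = Nl q x.
Proof. by rewrite /Pw /= mulmx1. Qed.

Lemma burau1 (F : fieldType) (t : F) x : burau_word t [:: x] = burau_letter t x.
Proof. by rewrite /burau_word /= mulmx1. Qed.

Lemma int_mul_eq1 (a d : int) : a * d = 1 -> (a = 1 /\ d = 1) \/ (a = -1 /\ d = -1).
Proof.
move=> H.
have : a = 1 \/ a = -1 \/ 2 <= a \/ a <= -2 \/ a = 0 by lia.
case=> [Ha|[Ha|[Ha|[Ha|Ha]]]].
- left; split=> //; move: H; rewrite Ha; lia.
- right; split=> //; move: H; rewrite Ha; lia.
- exfalso; have : d <= 0 \/ 1 <= d by lia. case=> Hd; nia.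
- exfalso; have : d <= -1 \/ 0 <= d by lia. case=> Hd; nia.
- exfalso; move: H; rewrite Ha; lia.
Qed.

Lemma choose_u r : r <> rtriv -> exists u : bword, Zint u 1 0 != 0 /\
  forall (F : fieldType) (t c : F), t != 0 ->
    burau_word t (restw r) = c *: 1%:M -> burau_word t u = c *: 1%:M.
Proof.
move=> Hr.
have Hd := d2_Pw1 (restw r).
have Hn1 := rest_nontriv Hr (or_introl erefl).
have Hn2 := rest_nontriv Hr (or_intror erefl).
move: Hd Hn1 Hn2; set M := Zint (restw r) => Hd Hn1 Hn2.
case: (eqVneq (M 1 0) 0) => H10; last first.
  by exists (restw r); split.
exists ([:: s2] ++ restw r ++ [:: s2i]); split.
  rewrite (Pw_cat _ [:: s2]) (Pw_cat _ (restw r)) !Pw1 -/M [M]m2_eta H10 /Nl !m2_mul m2E10.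
  move: Hd; rewrite /d2 H10 => Hd.
  have Hb : M 0 1 != 0.
    apply/eqP => Hb; move: Hn1 Hn2; rewrite [M]m2_eta Hb H10.
    have : (M 0 0 = 1 /\ M 1 1 = 1) \/ (M 0 0 = -1 /\ M 1 1 = -1).
      by apply: int_mul_eq1; move: Hd; rewrite mulr0 subr0.
    by case=> [[-> ->]|[-> ->]].
  have : (M 0 0 = 1 /\ M 1 1 = 1) \/ (M 0 0 = -1 /\ M 1 1 = -1).
    by apply: int_mul_eq1; move: Hd; rewrite mulr0 subr0.
  case=> [[E1 E2]|[E1 E2]]; rewrite E1 E2; apply/eqP => E; move/eqP: Hb; apply; lia.
move=> F t c ht Hc.
rewrite (burau_cat _ [:: s2]) (burau_cat _ (restw r)) Hc !burau1 -scalemxAl mul1mx -scalemxAr.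
have -> : s2i = letter_inv s2 by [].
by rewrite burau_free.
Qed.

Section Pole.
Variable C : numFieldType.
Local Notation RF := (RF C).
Local Notation qF := (qF C).
Local Notation "x %:F" := (@FracField.tofrac {poly C} x).

Lemma Pw_tofrac u : Pw qF u = map_mx (@tofrac _) (Pw ('X : {poly C}) u).
Proof. by rewrite map_Pw. Qed.

Lemma Pw_horner (q0 : C) u : Pw q0 u = map_mx (horner_eval q0) (Pw ('X : {poly C}) u).
Proof. by rewrite map_Pw /= horner_evalE hornerX. Qed.

Lemma Pw_intr u : Pw (1 : C) u = map_mx intr (Zint u).
Proof. by rewrite map_Pw rmorph1. Qed.

Lemma Mq_entries s (i j : 'I_2) : Mq C s i j =
  (qF ^+ ne (word_of s))^-1 * (Pw ('X : {poly C}) (word_of s) i j)%:F.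
Proof.
by rewrite Mq_word burau_Pw ?qF_neq0 // Pw_tofrac !mxE.
Qed.

Lemma ratio_cancel (F : fieldType) (k a b : F) : k != 0 -> (k * a) / (k * b) = a / b.
Proof. by move=> hk; rewrite invfM mulrACA divff // mul1r. Qed.

Lemma Mq_ratio s : Mq C s 0 0 / Mq C s 1 0 =
  (Pw ('X : {poly C}) (word_of s) 0 0)%:F / (Pw ('X : {poly C}) (word_of s) 1 0)%:F.
Proof.
rewrite !Mq_entries ratio_cancel // invr_eq0 expf_neq0 //; exact: qF_neq0.
Qed.

Lemma tofrac_inj (p d : {poly C}) : p%:F = d%:F :> RF -> p = d.
Proof.
move=> E; apply/eqP; rewrite -subr_eq0 -tofrac_eq0 rmorphB /= E subrr //.
Qed.

Lemma burau_entry (q0 : C) (hq : q0 != 0) u (i j : 'I_2) :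
  burau_word (-q0) u i j = (q0 ^+ ne u)^-1 * (Pw ('X : {poly C}) u i j).[q0].
Proof. by rewrite burau_Pw // Pw_horner !mxE. Qed.

Lemma sing_of_scalar (q0 : C) (hq : q0 != 0) u (c : C) : c != 0 ->
  burau_word (-q0) u = c *: 1%:M -> Zint u 1 0 != 0 -> singular_set q0.
Proof.
move=> hc Hc HZ; split=> //.
exists (map pair_of u); rewrite Mz_word word_of_pair; split=> //.
rewrite Mq_ratio word_of_pair.
set P := Pw ('X : {poly C}) u.
move=> [p [d [Hd E]]].
have HP10 : P 1 0 != 0.
  apply/eqP => H0.
  have := congr1 (fun M : 'M[C]_2 => M 1 0) (Pw_intr u).
  rewrite Pw_horner !mxE horner_evalE -/P H0 horner0 => /esym/eqP.
  by rewrite intr_eq0 (negbTE HZ).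
have Hd0 : d != 0 by apply: contraNneq Hd => ->; rewrite horner0.
have Ecross : P 0 0 * d = p * P 1 0.
  apply: tofrac_inj; rewrite !rmorphM /=.
  have hP : (P 1 0)%:F != 0 :> RF by rewrite tofrac_eq0.
  have hD : d%:F != 0 :> RF by rewrite tofrac_eq0.
  move: E => /(congr1 (fun x => x * (P 1 0)%:F * d%:F)).
  rewrite (divfK hP) -mulrA (mulrC (P 1 0)%:F) mulrA (divfK hD).
  by move=> ->.
have E10 := congr1 (fun M : 'M[C]_2 => M 1 0) Hc.
have E00 := congr1 (fun M : 'M[C]_2 => M 0 0) Hc.
rewrite /= !burau_entry // -/P m2_1 m2_scale ?m2E10 ?m2E00 mulr0 mulr1 in E10 E00.
have hk : (q0 ^+ ne u)^-1 != 0 by rewrite invr_eq0 expf_neq0.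
have H10 : (P 1 0).[q0] = 0.
  by move/eqP: E10; rewrite mulf_eq0 (negbTE hk) /= => /eqP.
have H00 : (P 0 0).[q0] != 0.
  by apply: contraNneq hc => H; rewrite -E00 H mulr0.
have := congr1 (fun x => x.[q0]) Ecross.
rewrite /= !hornerM H10 mulr0 => /eqP; rewrite mulf_eq0 (negbTE H00) /=.
by rewrite (negbTE Hd).
Qed.

Lemma pole_entry (q0 : C) (hq : q0 != 0) s :
  is_pole (Mq C s 0 0 / Mq C s 1 0) q0 -> burau_word (-q0) (word_of s) 1 0 = 0.
Proof.
move=> Hp; rewrite burau_entry //.
case: (eqVneq (Pw ('X : {poly C}) (word_of s) 1 0).[q0] 0) => [->|H]; first by rewrite mulr0.
by exfalso; apply: Hp; rewrite Mq_ratio; do 2 eexists; split; [exact: H|].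
Qed.

End Pole.

Lemma powL (R : comNzRingType) (q : R) n : exists S,
  (Nl q s2i) ^+ n = m2 (q ^+ n) 0 S 1 /\ (q - 1) * S = q ^+ n.+1 - q.
Proof.
elim: n => [|n [S [E HS]]].
  exists 0; split; first by rewrite !expr0; exact: m2_1.
  by rewrite mulr0 expr1 subrr.
exists (q ^+ n.+1 + S); split.
  rewrite exprS -mulmxE E /Nl m2_mul; apply: m2_eq; rewrite ?exprS; ring.
by rewrite mulrDr HS !exprS; ring.
Qed.

Lemma powL1 n : (Nl (1 : int) s2i) ^+ n = m2 1 0 n%:Z 1.
Proof.
elim: n => [|n IH]; first by rewrite expr0; exact: m2_1.
rewrite exprS -mulmxE IH /Nl m2_mul; apply: m2_eq; lia.
Qed.

Lemma sing_root (C : numFieldType) (q0 : C) N : q0 != 0 -> q0 != 1 -> (0 < N)%N ->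
  q0 ^+ N = 1 -> singular_set q0.
Proof.
move=> hq h1 hN hr.
apply: (@sing_of_scalar C q0 hq (nseq N s2i) 1); first exact: oner_neq0.
  rewrite burau_Pw // Pw_nseq.
  have [S [E HS]] := powL q0 N.
  have S0 : S = 0.
    move: HS; rewrite exprS hr mulr1 subrr => /eqP; rewrite mulf_eq0 subr_eq0 (negbTE h1) /=.
    by move/eqP.
  rewrite E S0 hr /ne count_nseq /= mul1n hr invr1 scale1r m2_1 scale1r.
  by [].
by rewrite Pw_nseq powL1 m2E10; lia.
Qed.

Definition Kw (g gi : bword) : bword :=
  g ++ g ++ [:: s1i] ++ gi ++ [:: s1] ++ [:: s1] ++ gi ++ [:: s1i].

Lemma K_rho (F : fieldType) (t x : F) (g gi : bword) : t != 0 ->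
  burau_word t g = m2 (-t) x 0 1 ->
  burau_word t gi = m2 (-t)^-1 (- x / (-t)) 0 1 ->
  burau_word t (Kw g gi) = 1%:M.
Proof.
move=> ht Eg Egi.
rewrite /Kw !burau_cat Eg Egi !burau1 !burau_letterE' //=.
have hq : - t != 0 by rewrite oppr_eq0.
move: (-t) hq Eg Egi => q hq _ _.
rewrite /Nl expr0 expr1 invr1 !scale1r !m2_scale !m2_mul m2_1.
apply: m2_eq; field; by rewrite ?hq ?ht.
Qed.

Lemma K_int (g gi : bword) (a c : int) :
  Zint g = m2 (1 - a * c) (a ^+ 2) (- c ^+ 2) (1 + a * c) ->
  Zint gi = m2 (1 + a * c) (- a ^+ 2) (c ^+ 2) (1 - a * c) ->
  Zint (Kw g gi) 1 0 = 2 * c ^+ 4 + 4 * c ^+ 6.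
Proof.
move=> Eg Egi.
rewrite /Kw !Pw_cat Eg Egi !Pw1 /Nl !m2_mul m2E10; ring.
Qed.

Lemma conj_upper (F : fieldType) (q a b d a' b' c' d' : F) : q != 0 ->
  a * a' + b * c' = 1 -> a * b' + b * d' = 0 -> 0 * a' + d * c' = 0 -> 0 * b' + d * d' = 1 ->
  m2 a b 0 d *m (m2 q 1 0 1 *m m2 a' b' c' d') = m2 q ((a + b - q * b) / d) 0 1 /\
  m2 a b 0 d *m (m2 q^-1 (- q^-1) 0 1 *m m2 a' b' c' d') =
    m2 q^-1 (- ((a + b - q * b) / d) / q) 0 1.
Proof.
move=> hq E1 E2 E3 E4.
rewrite mul0r add0r in E3. rewrite mul0r add0r in E4.
have hd : d != 0 by apply/eqP => h0; move: E4; rewrite h0 mul0r => /esym/eqP; rewrite oner_eq0.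
have hc : c' = 0 by move/eqP: E3; rewrite mulf_eq0 (negbTE hd) /= => /eqP.
rewrite hc mulr0 addr0 in E1.
have ha : a != 0 by apply/eqP => h0; move: E1; rewrite h0 mul0r => /esym/eqP; rewrite oner_eq0.
have ha' : a' = a^-1 by apply: (mulfI ha); rewrite E1 divff.
have hd' : d' = d^-1 by apply: (mulfI hd); rewrite E4 divff.
have hb' : b' = - (b * d') / a.
  apply: (mulfI ha); rewrite mulrCA divff // mulr1.
  by apply/eqP; rewrite -addr_eq0 E2.
rewrite hb' ha' hd' hc.
split; rewrite !m2_mul; apply: m2_eq; field; by rewrite ?ha ?hd ?hq.
Qed.

Lemma conj_rho (F : fieldType) (t : F) u : t != 0 -> burau_word t u 1 0 = 0 ->
  exists x, burau_word t (u ++ [:: s1] ++ inv_word u) = m2 (-t) x 0 1 /\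
    burau_word t (u ++ [:: s1i] ++ inv_word u) = m2 (-t)^-1 (- x / (-t)) 0 1.
Proof.
move=> ht H10.
have HAA : burau_word t u *m burau_word t (inv_word u) = 1%:M.
  by rewrite -burau_cat (burau_inv ht (cat_inv u)).
move: H10 HAA.
set A := burau_word t u; set A' := burau_word t (inv_word u) => H10 HAA.
rewrite [A]m2_eta [A']m2_eta H10 m2_mul m2_1 in HAA.
case/m2_inj: HAA => E1 E2 E3 E4.
have hq : - t != 0 by rewrite oppr_eq0.
have [C1 C2] := conj_upper hq E1 E2 E3 E4.
eexists; rewrite !burau_cat !burau1 -/A -/A' [A]m2_eta [A']m2_eta H10.
rewrite (burau_letterE' ht s1) (burau_letterE' ht s1i) /Nl /= expr0 expr1 invr1 scale1r.
split; first exact: C1.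
rewrite m2_scale mulr1 mulr0 mulrN mulr1 (mulrC _ (-t)) divff //.
Qed.

Lemma Zinv_adj u : Zint (inv_word u) =
  m2 (Zint u 1 1) (- Zint u 0 1) (- Zint u 1 0) (Zint u 0 0).
Proof.
have Hd := d2_Pw1 u.
have HM : Zint u *m Zint (inv_word u) = 1%:M.
  by rewrite -Pw_cat (Pw1_inv (cat_inv u)).
set M := Zint u; set Mi := Zint (inv_word u).
have Hadj : m2 (M 1 1) (- M 0 1) (- M 1 0) (M 0 0) *m M = 1%:M.
  rewrite {5}[M]m2_eta m2_mul m2_1; move: Hd; rewrite /d2 -/M => Hd.
  by apply: m2_eq; rewrite -?Hd; ring.
rewrite -[Mi]mul1mx -Hadj -mulmxA -/M -/Mi HM mulmx1 //.
Qed.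

Lemma Zg u (a c : int) : Zint u 0 0 = a -> Zint u 1 0 = c ->
  Zint (u ++ [:: s1] ++ inv_word u) = m2 (1 - a * c) (a ^+ 2) (- c ^+ 2) (1 + a * c) /\
  Zint (u ++ [:: s1i] ++ inv_word u) = m2 (1 + a * c) (- a ^+ 2) (c ^+ 2) (1 - a * c).
Proof.
move=> Ha Hc.
have Hd := d2_Pw1 u.
rewrite !Pw_cat !Pw1 Zinv_adj.
move: Hd; rewrite /d2.
set M := Zint u.
rewrite [M]m2_eta !m2E00 !m2E01 !m2E10 !m2E11 Ha Hc /Nl => Hd.
rewrite !m2_mul; move: (M 0 1) (M 1 1) Hd => b d Hd.
split; apply: m2_eq; nia.
Qed.
Lemma poly_ne0 (c : int) : c != 0 -> 2 * c ^+ 4 + 4 * c ^+ 6 != 0.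
Proof.
move=> hc.
have hy : 1 <= c * c by nia.
have -> : 2 * c ^+ 4 + 4 * c ^+ 6 = 2 * (c * c) * (c * c) + 4 * (c * c) * (c * c) * (c * c) by ring.
move: (c * c) hy => y hy.
apply/eqP; nia.
Qed.
Lemma n64 (C : numFieldType) : ((2 : C) ^+ 3) ^+ 2 != 1.
Proof.
by rewrite -exprM -natrX pnatr_eq1.
Qed.

Lemma dirB (C : numFieldType) (t0 : C) (ht0 : t0 != 0) :
  burau_faithful t0 -> ~ ext_singular_set (- t0).
Proof.
move=> Hf [[_ [s [HZ Hp]]] | H1].
  have hq : - t0 != 0 by rewrite oppr_eq0.
  have H10 := pole_entry hq Hp; rewrite opprK in H10.
  set u := word_of s in H10.
  have [x [Eg Egi]] := conj_rho ht0 H10.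
  have HK := K_rho ht0 Eg Egi.
  have Hb := Hf _ HK.
  have HZK := Pw1_inv Hb.
  have [Eg' Egi'] := @Zg u (Zint u 0 0) (Zint u 1 0) erefl erefl.
  have := K_int Eg' Egi'; rewrite HZK (_ : Pw (1:int) [::] = 1%:M) // m2_1 m2E10.
  move/esym/eqP; apply/negP; apply: poly_ne0.
  by move: HZ; rewrite Mz_word.
have Ht : t0 = -1 by rewrite -H1 opprK.
have H2 : burau_word t0 (Zn 2) = 1%:M.
  by rewrite burau_Zn Ht -exprM mulnC exprM sqrrN !expr1n scale1r.
have Hb := Hf _ H2.
have h2 : (2 : C) != 0 by rewrite pnatr_eq0.
have := burau_inv h2 Hb; rewrite burau_Zn /burau_word /= m2_1 m2_scale.
move/m2_inj => [E _ _ _]; move: E; rewrite mulr1 => /eqP.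
by rewrite (negbTE (n64 C)).
Qed.

Lemma pow_eq_root (F : fieldType) (T : F) (k m : nat) : T != 0 -> T ^+ k = T ^+ m -> k <> m ->
  exists d, (0 < d)%N /\ T ^+ d = 1.
Proof.
move=> hT E hkm.
have Hgen : forall a b : nat, T ^+ a = T ^+ b -> (a < b)%N -> T ^+ (b - a) = 1.
  move=> a b Eab hab.
  have hb : (a <= b)%N by apply: ltnW.
  have : T ^+ a * T ^+ (b - a) = T ^+ a * 1 by rewrite -exprD (subnKC hb) mulr1.
  by move/(mulfI (expf_neq0 a hT)).
case: (ltngtP k m) => h.
- by exists (m - k)%N; split; [rewrite subn_gt0 | exact: (Hgen k m E h)].
- by exists (k - m)%N; split; [rewrite subn_gt0 | exact: (Hgen m k (esym E) h)].
- by exfalso; apply: hkm.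
Qed.


Lemma dirA (C : numFieldType) (t0 : C) (ht0 : t0 != 0) :
  ~ ext_singular_set (- t0) -> burau_faithful t0.
Proof.
move=> Hn w Hw.
have hq0 : - t0 != 0 by rewrite oppr_eq0.
have Hnf := nfz_ok w.
move: Hnf; case E: (nfz w) => [k r] Hnf.
have Hrho := burau_inv ht0 Hnf.
rewrite /emb /= (burau_cat _ (Zn (size w)) w) (burau_cat _ (Zn k)) Hw !burau_Zn mulmx1 -scalemxAl mul1mx in Hrho.
set T := t0 ^+ 3 in Hrho.
have hT : T != 0 by rewrite expf_neq0.
have hTk : T ^+ k != 0 by rewrite expf_neq0.
have Hrest : burau_word t0 (restw r) = ((T ^+ k)^-1 * T ^+ (size w)) *: 1%:M.
  by rewrite -scalerA Hrho scalerA mulVf // scale1r.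
have hc : (T ^+ k)^-1 * T ^+ (size w) != 0 by rewrite mulf_neq0 ?invr_eq0 ?expf_neq0.
case: (eqVneq r rtriv) => Hr; last first.
  have [u [HZ Hu]] := choose_u (fun H => (negP Hr) (introT eqP H)).
  have Hu' := Hu C t0 _ ht0 Hrest.
  exfalso; apply Hn; left.
  apply: (sing_of_scalar hq0 hc _ HZ).
  by rewrite opprK.
subst r.
have Er : restw rtriv = [::] by [].
have Ek : T ^+ k = T ^+ size w.
  move: Hrho; rewrite Er (_ : burau_word t0 [::] = 1%:M); last by [].
  rewrite !m2_1 !m2_scale => /m2_inj [E00 _ _ _].
  by move: E00; rewrite !mulr1.
case: (eqVneq k (size w)) => hkm.
  subst k.
  apply: (@cancel_l (Zn (size w))).
  by move: Hnf; rewrite /emb /= Er cats0.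
have [d [hd HTd]] := pow_eq_root hT Ek (fun h => (negP hkm) (introT eqP h)).
exfalso; apply Hn; left.
apply: (@sing_root C (- t0) (6 * d)%N hq0).
- by apply/eqP => h1; apply: Hn; right.
- by rewrite muln_gt0.
- have E6 : (- t0) ^+ 6 = T ^+ 2.
    by rewrite -[6%N]/(2 * 3)%N exprM sqrrN -exprM /T -exprM mulnC.
  by rewrite exprM E6 -exprM mulnC exprM HTd expr1n.
Qed.


Unset Implicit Arguments.

Theorem theorem1 (R : realType) (t0 : complex R) (ht0 : t0 != 0) :
  burau_faithful t0 <-> ~ ext_singular_set (- t0).
Proof.
split; [exact: dirB | exact: dirA].
Qed.
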